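(* Let $\mathbf M=(\mathbb{X},\mathbb{X}_0,\mathbf{t})$ be a Markov chain with unknown transition kernel $\mathbf{t}$, and let data $\hat X=[\hat x_1,\dots,\hat x_N]^\top$, $\hat X^+=[\hat x_1^+,\dots,\hat x_N^+]^\top$ be given with $\hat x_i^+\sim\mathbf{t}(\cdot\mid X=\hat x_i)$. Let $k_+,k_x:\mathbb{X}\times\mathbb{X}\to\mathbb{R}$ be kernels with $k_+$ universal, and let $K_{\hat X}=[k_x(\hat x_i,\hat x_j)]_{i,j=1}^N$. Let $\varepsilon\ge0$ be such that the ambiguity set $\mathcal{A}^N_\varepsilon:=\{\mu\in\mathcal{G}:\|\mu-\hat\mu^N_{k_+|k_x}\|_{\mathcal{G}}\le\varepsilon\}$ satisfies $\mathbb{P}(\mu_{k_+|k_x}(\mathbf{t})\in\mathcal{A}^N_\varepsilon)\ge1-\rho$ for a given $1-\rho\in[0,1]$. Suppose there exists a function $B:\mathbb{X}\to\mathbb{R}_{\ge0}$ with $B\in\mathcal{H}_{k_+}$, a constant $\bar B\ge\|B\|_{\mathcal{H}_{k_+}}$, and a constant $c\ge0$ such that $$\forall x\in\mathbb{X}:\quad w(x)^\top B(\hat X^+)-B(x)\le c-\varepsilon\sqrt{k_x(x,x)}\,\bar B,$$ where $w(x)^\top:=k_{\hat X}(x)^\top[K_{\hat X}+N\lambda I_N]^{-1}$ with a constant $\lambda\ge0$, $k_{\hat X}(x):=[k_x(x,\hat x_i)]_{i=1}^N$, and $B(\hat X^+)=[B(\hat x_i^+)]_{i=1}^N$. Then with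 probability at least $1-\rho$, $\mathbb{E}_{\mathbf{t}}[B(X^+)\mid X=x]-B(x)\le c$ for all $x\in\mathbb{X}$.
   Context: $\mathbb{X}$ is a Polish space with Borel $\sigma$-algebra. A Markov chain $\mathbf M=(\mathbb{X},\mathbb{X}_0,\mathbf{t})$ consists of the state space $\mathbb{X}$, initial states $\mathbb{X}_0\subset\mathbb{X}$ and a probability kernel $\mathbf{t}$; given state $x$, the next state is $X^+\sim\mathbf{t}(\cdot\mid X=x)$. The data are i.i.d. with $\hat x_i$ uniform on $\mathbb{X}$. All kernels are positive definite and bounded with separable RKHSs; $\mathcal{H}_k$ is the RKHS of $k$ and $\phi_+$ the feature map of $k_+$ ($k_+(x,x')=\langle\phi_+(x),\phi_+(x')\rangle_{\mathcal{H}_{k_+}}$). $k_+$ universal means $\mathcal{H}_{k_+}$ is dense in the continuous functions. $\mathcal{G}$ is the vector-valued RKHS of functions $\mathbb{X}\to\mathcal{H}_{k_+}$ with operator-valued kernel $\Gamma(x,x')=k_x(x,x')\mathrm{Id}_{\mathcal{H}_{k_+}}$. The conditional mean embedding of $\mathbf{t}$ is $\mu_{k_+|k_x}(\mathbf{t})(x):=\mathbb{E}_{\mathbf{t}}[\phi_+(X^+)\mid X=x]$, assumed to lie in $\mathcal{G}$, and satisfies $\mathbb{E}_{\mathbf{t}}[f(X^+)\mid X=x]=\langle f,\mu_{k_+|k_x}(\mathbf{t})(x)\rangle_{\mathcal{H}_{k_+}}$ almost surely for $f\in\mathcal{H}_{k_+}$. The empirical CME is $\hat\mu^N_{k_+|k_x}(x):=k_{\hat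 X}(x)^\top[K_{\hat X}+N\lambda I_N]^{-1}[\phi_+(\hat x_i^+)]_{i=1}^N$ (the matrix $K_{\hat X}+N\lambda I_N$ is assumed invertible). The probability ''at least $1-\rho$'' refers to the randomness of the data. *)

(* Defs.v *)
From HB Require Import structures.
From mathcomp Require Import all_boot all_order all_algebra.
From mathcomp Require Import all_classical all_reals all_analysis.
Set Implicit Arguments. Unset Strict Implicit. Unset Printing Implicit Defensive.
Import Order.TTheory GRing.Theory Num.Theory.
Import numFieldNormedType.Exports.
Local Open Scope classical_set_scope.
Local Open Scope ring_scope.

Section Defs.
Variable R : realType.

Definition inner_product (V : lmodType R) (ip : V -> V -> R) : Prop :=
  [/\ (forall u v, ip u v = ip v u),
      (forall (a : R) u v w, ip (a *: u + v) w = a * ip u w + ip v w),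
      (forall u, 0 <= ip u u) &
      (forall u, ip u u = 0 -> u = 0)].

Definition ipnorm (V : lmodType R) (ip : V -> V -> R) (u : V) : R :=
  Num.sqrt (ip u u).

Definition ip_complete (V : lmodType R) (ip : V -> V -> R) : Prop :=
  forall u : nat -> V,
    (forall e : R, 0 < e -> exists M : nat, forall m n : nat,
        (M <= m)%N -> (M <= n)%N -> ipnorm ip (u m - u n) < e) ->
    exists v : V, forall e : R, 0 < e -> exists M : nat, forall n : nat,
        (M <= n)%N -> ipnorm ip (u n - v) < e.

Definition is_hilbert (V : lmodType R) (ip : V -> V -> R) : Prop :=
  inner_product ip /\ ip_complete ip.

Definition ip_separable (V : lmodType R) (ip : V -> V -> R) : Prop :=
  exists D : set V, countable D /\
    forall v e, 0 < e -> exists d, D d /\ ipnorm ip (v - d) < e.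

(** [(V, ip)] realised through the evaluation map [ev] (an injective linear
    map into functions X -> R) is the RKHS H_k of the kernel [k], with
    feature map [phi] (phi x = k(., x)) and reproducing property. *)
Definition is_rkhs (X : Type) (k : X -> X -> R)
    (V : lmodType R) (ip : V -> V -> R) (ev : V -> X -> R) (phi : X -> V) : Prop :=
  [/\ is_hilbert ip,
      (forall (a : R) u v, ev (a *: u + v) = (fun x => a * ev u x + ev v x)),
      injective ev,
      (forall x y, ev (phi x) y = k y x) &
      (forall f x, ev f x = ip f (phi x))].

(** Vector-valued RKHS G of functions X -> V (V with inner product ipH)
    with operator-valued kernel Gamma(x,x') = k(x,x') Id_V.
    [evG] realises elements of G as functions; [Gam x h] is Gamma(., x) h. *)
Definition is_vvrkhs (X : Type) (k : X -> X -> R)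
    (V : lmodType R) (ipH : V -> V -> R)
    (W : lmodType R) (ipG : W -> W -> R)
    (evG : W -> X -> V) (Gam : X -> V -> W) : Prop :=
  [/\ is_hilbert ipG,
      (forall (a : R) u v, evG (a *: u + v) = (fun x => a *: evG u x + evG v x)),
      injective evG,
      (forall x h y, evG (Gam x h) y = k y x *: h) &
      (forall g x h, ipH (evG g x) h = ipG g (Gam x h))].

Definition pd_kernel (X : Type) (k : X -> X -> R) : Prop :=
  (forall x y, k x y = k y x) /\
  forall (n : nat) (xs : 'I_n -> X) (a : 'I_n -> R),
    0 <= \sum_(i < n) \sum_(j < n) a i * a j * k (xs i) (xs j).

Definition bounded_kernel (X : Type) (k : X -> X -> R) : Prop :=
  exists M : R, forall x y, `|k x y| <= M.

Definition universal_rkhs (X : topologicalType) (V : lmodType R)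
    (ev : V -> X -> R) : Prop :=
  forall f : X -> R, continuous f ->
  forall K : set X, compact K ->
  forall e : R, 0 < e -> exists h : V, forall x, K x -> `|ev h x - f x| < e.

(** Polish space given as a complete pseudometric space that is Hausdorff
    (hence metric) and separable. *)
Definition polish_cpm (X : completePseudoMetricType R) : Prop :=
  hausdorff_space X /\ exists D : set X, countable D /\ closure D = setT.

Definition gram (X : Type) (N : nat) (k : X -> X -> R) (xs : 'I_N -> X)
  : 'M[R]_N := \matrix_(i, j) k (xs i) (xs j).

Definition reg_gram (X : Type) (N : nat) (k : X -> X -> R) (xs : 'I_N -> X)
    (lam : R) : 'M[R]_N :=
  gram k xs + (N%:R * lam)%:M.

Definition cme_weights (X : Type) (N : nat) (k : X -> X -> R) (xs : 'I_N -> X)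
    (lam : R) (x : X) : 'rV[R]_N :=
  (\row_j k x (xs j)) *m invmx (reg_gram k xs lam).

Definition emp_cme (X : Type) (N : nat) (k : X -> X -> R) (xs xps : 'I_N -> X)
    (lam : R) (V : lmodType R) (phi : X -> V) (x : X) : V :=
  \sum_(i < N) (cme_weights k xs lam x) ord0 i *: phi (xps i).

End Defs.

(* Main.v *)
Require Import Defs.
From HB Require Import structures.
From mathcomp Require Import all_boot all_order all_algebra.
From mathcomp Require Import all_classical all_reals all_analysis.
From mathcomp Require Import ring lra.
Import Order.TTheory GRing.Theory Num.Theory.
Import numFieldNormedType.Exports.
Local Open Scope classical_set_scope.
Local Open Scope ring_scope.


Section IP.
Variables (R : realType) (V : lmodType R) (ip : V -> V -> R).
Hypothesis hip : inner_product ip.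

Lemma ip0l w : ip 0 w = 0.
Proof.
case: hip => _ hl _ _.
have := hl 1 0 0 w; rewrite scaler0 addr0 mul1r => H.
have H2 : ip 0 w + 0 = ip 0 w + ip 0 w by rewrite addr0.
by rewrite (addrI _ H2).
Qed.

Lemma ipDl u v w : ip (u + v) w = ip u w + ip v w.
Proof. by case: hip => _ hl _ _; rewrite -[u in LHS]scale1r hl mul1r. Qed.

Lemma ipZl a u w : ip (a *: u) w = a * ip u w.
Proof. by case: hip => _ hl _ _; rewrite -[a *: u]addr0 hl ip0l addr0. Qed.

Lemma ipDr u v w : ip w (u + v) = ip w u + ip w v.
Proof. by case: hip => hs _ _ _; rewrite hs ipDl (hs u) (hs v). Qed.

Lemma ipZr a u w : ip w (a *: u) = a * ip w u.
Proof. by case: hip => hs _ _ _; rewrite hs ipZl hs. Qed.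

Lemma ip_sumr (n : nat) (a : 'I_n -> R) (f : 'I_n -> V) w :
  ip w (\sum_(i < n) a i *: f i) = \sum_(i < n) a i * ip w (f i).
Proof.
apply: (big_ind2 (fun x y => ip w x = y)).
- by case: hip => hs _ _ _; rewrite hs ip0l.
- by move=> x1 x2 y1 y2 <- <-; rewrite ipDr.
- by move=> i _; rewrite ipZr.
Qed.

Lemma ip_expand x y u v : ip (x *: u + y *: v) (x *: u + y *: v) =
  x ^+ 2 * ip u u + 2 * x * y * ip u v + y ^+ 2 * ip v v.
Proof.
case: hip => hs _ _ _.
rewrite ipDl !ipZl !ipDr !ipZr (hs v u); ring.
Qed.

Lemma ip_cs u v : ip u v <= ipnorm ip u * ipnorm ip v.
Proof.
case: hip => hs _ hpos hdef.
rewrite /ipnorm.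
have [Hu|Hu] := eqVneq (ip u u) 0.
  by rewrite (hdef _ Hu) !ip0l sqrtr0 mul0r.
have [Hv|Hv] := eqVneq (ip v v) 0.
  by rewrite (hdef _ Hv) (hs u 0) !ip0l sqrtr0 mulr0.
set bb := Num.sqrt (ip u u); set a := Num.sqrt (ip v v).
have ha : 0 < a by rewrite sqrtr_gt0 lt_def Hv hpos.
have hb : 0 < bb by rewrite sqrtr_gt0 lt_def Hu hpos.
have ea : a ^+ 2 = ip v v by rewrite sqr_sqrtr.
have eb : bb ^+ 2 = ip u u by rewrite sqr_sqrtr.
have := hpos (a *: u + (- bb) *: v); rewrite ip_expand -ea -eb => H.
have hab : 0 < a * bb by rewrite mulr_gt0.
rewrite mulrC; nra.
Qed.
End IP.

Theorem theorem2
  (R : realType)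
  (* state space: Polish, with Borel sigma-algebra *)
  (X : completePseudoMetricType R)
  (hX : polish_cpm X)
  (* unknown transition kernel t of the Markov chain *)
  (t : R.-pker (g_sigma_algebraType (@open X)) ~> (g_sigma_algebraType (@open X)))
  (* kernel k_+ with its RKHS H_{k+} *)
  (kp : X -> X -> R) (VH : lmodType R) (ipH : VH -> VH -> R)
  (evH : VH -> X -> R) (phip : X -> VH)
  (hH : is_rkhs kp ipH evH phip) (hkp_bdd : bounded_kernel kp)
  (hH_sep : ip_separable ipH) (hkp_univ : universal_rkhs evH)
  (* kernel k_x and the vector-valued RKHS G *)
  (kx : X -> X -> R) (hkx_pd : pd_kernel kx) (hkx_bdd : bounded_kernel kx)
  (VG : lmodType R) (ipG : VG -> VG -> R)
  (evG : VG -> X -> VH) (Gam : X -> VH -> VG)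
  (hG : is_vvrkhs kx ipH ipG evG Gam) (hG_sep : ip_separable ipG)
  (* conditional mean embedding of t, assumed to lie in G *)
  (mu : X -> VH)
  (hmu : forall (x : X) (f : VH),
      (ipH f (mu x))%:E = (\int[t x]_y (evH f y)%:E)%E)
  (gmu : VG) (hgmu : evG gmu = mu)
  (* probability space carrying the data *)
  (dO : measure_display) (Omega : measurableType dO) (P : probability Omega R)
  (N : nat)
  (xh xp : 'I_N -> Omega -> g_sigma_algebraType (@open X))
  (hxh_meas : forall i, measurable_fun setT (xh i))
  (hxp_meas : forall i, measurable_fun setT (xp i))
  (hxp_law : forall i (A B : set (g_sigma_algebraType (@open X))),
      measurable A -> measurable B ->
      P (xh i @^-1` A `&` xp i @^-1` B) =
      (\int[P]_(w in xh i @^-1` A) t (xh i w) B)%E)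
  (* regularisation and invertibility *)
  (lam : R) (hlam : 0 <= lam)
  (hinv : forall w : Omega,
      reg_gram kx (fun i => xh i w) lam \in unitmx)
  (* ambiguity set with confidence 1 - rho *)
  (eps rho : R) (heps : 0 <= eps) (hrho0 : 0 <= 1 - rho) (hrho1 : 1 - rho <= 1)
  (hAmeas : measurable [set w : Omega | exists g : VG,
      evG g = emp_cme kx (fun i => xh i w) (fun i => xp i w) lam phip /\
      ipnorm ipG (gmu - g) <= eps])
  (hAprob : ((1 - rho)%:E <= P [set w : Omega | exists g : VG,
      evG g = emp_cme kx (fun i => xh i w) (fun i => xp i w) lam phip /\
      (ipnorm ipG (gmu - g) <= eps)%R])%E) :
  exists F : set Omega,
    [/\ measurable F, ((1 - rho)%:E <= P F)%E &
    forall w : Omega, F w ->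
    forall (b : VH) (Bbar c : R),
      (forall x, 0 <= evH b x) ->
      ipnorm ipH b <= Bbar ->
      0 <= c ->
      (forall x : X,
        \sum_(i < N) (cme_weights kx (fun j => xh j w) lam x) ord0 i
                     * evH b (xp i w) - evH b x
          <= c - eps * Num.sqrt (kx x x) * Bbar) ->
      forall x : X,
        ((\int[t x]_y (evH b y)%:E) - (evH b x)%:E <= c%:E)%E].
Proof.
exists [set w : Omega | exists g : VG,
      evG g = emp_cme kx (fun i => xh i w) (fun i => xp i w) lam phip /\
      (ipnorm ipG (gmu - g) <= eps)%R].
split => //.
move=> w [g [hg hn]] b Bbar c hb0 hbB hc hB x.
case: hH => [[ipHp _] _ _ _ hevH].
case: hG => [[ipGp _] hlinG _ hGam hipG].
rewrite -hmu -EFinB lee_fin.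
set h := gmu - g.
have emu : mu x = evG h x + evG g x.
  rewrite -hgmu.
  have -> : gmu = 1 *: h + g by rewrite scale1r /h subrK.
  by rewrite hlinG /= scale1r.
rewrite emu ipDr //.
have eS : ipH b (evG g x) = \sum_(i < N) (cme_weights kx (fun j => xh j w) lam x) ord0 i * evH b (xp i w).
  rewrite hg /emp_cme ip_sumr //; apply: eq_bigr => i _; by rewrite hevH.
rewrite eS.
have hk : 0 <= kx x x.
  case: hkx_pd => _ /(_ 1%N (fun _ => x) (fun _ => 1)).
  by rewrite !big_ord1 !mul1r.
have hcs : ipH b (evG h x) <= eps * Num.sqrt (kx x x) * Bbar.
  case: (ipHp) => hsH _ hposH _.
  rewrite (hsH b) hipG.
  apply: (le_trans (@ip_cs _ _ _ ipGp h (Gam x b))).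
  have -> : ipnorm ipG (Gam x b) = Num.sqrt (kx x x) * ipnorm ipH b.
    by rewrite /ipnorm -hipG hGam (@ipZl _ _ _ ipHp) sqrtrM.
  rewrite mulrA; apply: ler_pM.
  - by apply: mulr_ge0; apply: sqrtr_ge0.
  - exact: sqrtr_ge0.
  - by apply: ler_pM => //; apply: sqrtr_ge0.
  - exact: hbB.
have := hB x; lra.
Qed.
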